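(* In the time-dependent setting below, for $u^0\in l^{\infty,+}$ and $t_0\in\mathbb R$: if $u^0\le d\phi(t_0,\cdot)+d_1\phi_1(t_0,\cdot)$ (resp. $u^0\ge d\phi(t_0,\cdot)-d_1\phi_1(t_0,\cdot)$) with $0<d\le2$ and $d_1$ sufficiently large, then $u(t;t_0,u^0)\le d\phi(t,\cdot)+d_1\phi_1(t,\cdot)$ (resp. $u(t;t_0,u^0)\ge d\phi(t,\cdot)-d_1\phi_1(t,\cdot)$) for all $t\ge t_0$.
   Context: Time-dependent setting: the lattice equation $\dot u_j(t)=\big(u_{j+1}(t)-u_j(t)\big)+\big(u_{j-1}(t)-u_j(t)\big)+u_j(t)f(t,u_j(t))$, $j\in\mathbb Z$ (spatially homogeneous, unit diffusion, which is the normalization behind the formulas below), where $f$ satisfies (H0): locally Hölder in $t$, Lipschitz in $u$, $C^1$ in $u$ for $u\ge0$, $f(t,u)=f(t,0)$ for $u\le0$, $f(t,u)<0$ for $u\ge M_0$, $f_u<0$ for $u\ge0$, $\liminf_{t-s\to\infty}\frac1{t-s}\int_s^tf(\tau,0)d\tau>0$. $u(t;s,u^0)$ is the solution with $u(s;s,u^0)=u^0$; $l^{\infty,+}$ is the set of bounded nonnegative sequences; inequalities componentwise. Let $\bar f_{\inf}=\liminf_{t-s\to\infty}\frac1{t-s}\int_s^tf(\tau,0)d\tau$ and $\tilde c_0^-=\inf_{\mu>0}\frac{e^{-\mu}+e^\mu-2+\bar f_{\inf}}{\mu}$, attained at a unique $\mu^*>0$. Fix $\gamma>\tilde c_0^-$,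 let $0<\mu<\mu^*$ solve $\frac{e^{-\mu}+e^\mu-2+\bar f_{\inf}}{\mu}=\gamma$, and $c(t)=\frac{e^{-\mu}+e^\mu-2+f(t,0)}{\mu}$. Let $\phi(t,j)=e^{-\mu(j-\int_0^tc(\tau)d\tau)}$. Choose $\tilde\mu\in(\mu,2\mu)$ such that $B(t)=-(e^{-\tilde\mu}+e^{\tilde\mu}-2)+c(t)\tilde\mu-f(t,0)$ has $\liminf_{t-s\to\infty}\frac1{t-s}\int_s^tB>0$, and $A\in W^{1,\infty}(\mathbb R)$ with $\operatorname{ess\,inf}_{t}(A'(t)+B(t))>0$. Let $\phi_1(t,j)=e^{A(t)-\tilde\mu(j-\int_0^tc(\tau)d\tau)}$. *)

(* Defs.v *)
From Stdlib Require Import Reals Lra ZArith ClassicalEpsilon.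
Open Scope R_scope.

(* Riemann integral of g over [a,b] (signed, as RiemannInt); its value is
   independent of the integrability proof.  For non-integrable g the value is
   unspecified, but all functions used below are continuous. *)
Definition Rint (g : R -> R) (a b : R) : R :=
  epsilon (inhabits 0%R)
    (fun I => exists pr : Riemann_integrable g a b, RiemannInt pr = I).

Definition avg (g : R -> R) (s t : R) : R := Rint g s t / (t - s).

(* L = liminf_{t-s -> oo} (1/(t-s)) int_s^t g   (finite value) *)
Definition is_liminf_avg (g : R -> R) (L : R) : Prop :=
  forall eps, 0 < eps ->
    (exists T, 0 < T /\ forall s t, T <= t - s -> L - eps <= avg g s t) /\
    (forall T, exists s t, T <= t - s /\ avg g s t <= L + eps).

(* liminf_{t-s -> oo} (1/(t-s)) int_s^t g > 0  (value possibly +oo) *)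
Definition liminf_avg_pos (g : R -> R) : Prop :=
  exists delta T, 0 < delta /\ 0 < T /\
    forall s t, T <= t - s -> delta <= avg g s t.

Definition lattice_rhs (f : R -> R -> R) (t : R) (v : Z -> R) (j : Z) : R :=
  (v (j + 1)%Z - v j) + (v (j - 1)%Z - v j) + v j * f t (v j).

Definition linf_plus (v : Z -> R) : Prop :=
  (exists M, forall j, Rabs (v j) <= M) /\ (forall j, 0 <= v j).

Definition is_solution (f : R -> R -> R) (t0 : R) (u0 : Z -> R)
    (u : R -> Z -> R) : Prop :=
  (forall j, u t0 j = u0 j) /\
  (forall T, t0 <= T -> exists M, forall t j, t0 <= t <= T -> Rabs (u t j) <= M) /\
  (forall j t, t0 < t ->
      derivable_pt_lim (fun s => u s j) t (lattice_rhs f t (u t) j)) /\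
  (forall j eps, 0 < eps -> exists delta, 0 < delta /\
      forall t, t0 <= t < t0 + delta -> Rabs (u t j - u0 j) < eps).

Definition H0 (f fu : R -> R -> R) (M0 : R) : Prop :=
  (forall K, 0 < K -> exists alpha L, 0 < alpha <= 1 /\ 0 <= L /\
      forall t s u, Rabs t <= K -> Rabs s <= K -> Rabs u <= K ->
        Rabs (f t u - f s u) <= L * Rpower (Rabs (t - s)) alpha) /\
  (forall K, 0 < K -> exists L, 0 <= L /\
      forall t u v, Rabs u <= K -> Rabs v <= K ->
        Rabs (f t u - f t v) <= L * Rabs (u - v)) /\
  (forall t u, 0 < u -> derivable_pt_lim (f t) u (fu t u)) /\
  (forall t u, 0 <= u -> forall eps, 0 < eps -> exists delta, 0 < delta /\
      forall v, 0 <= v -> Rabs (v - u) < delta -> Rabs (fu t v - fu t u) < eps) /\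
  (forall t u, u <= 0 -> f t u = f t 0) /\
  (forall t u, M0 <= u -> f t u < 0) /\
  (forall t u, 0 <= u -> fu t u < 0) /\
  liminf_avg_pos (fun t => f t 0).

Definition speed (a mu : R) : R := (exp (- mu) + exp mu - 2 + a) / mu.

Definition cfun (f : R -> R -> R) (mu : R) (t : R) : R := speed (f t 0) mu.

Definition Bfun (f : R -> R -> R) (mu mut : R) (t : R) : R :=
  - (exp (- mut) + exp mut - 2) + cfun f mu t * mut - f t 0.

Definition phi (f : R -> R -> R) (mu : R) (t : R) (j : Z) : R :=
  exp (- mu * (IZR j - Rint (cfun f mu) 0 t)).

Definition phi1 (f : R -> R -> R) (mu mut : R) (A : R -> R) (t : R) (j : Z) : R :=
  exp (A t - mut * (IZR j - Rint (cfun f mu) 0 t)).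

(* A in W^{1,infty}(R) with ess inf (A' + B) > 0, expressed without measure
   theory: A bounded and Lipschitz, and A(t)-A(s)+int_s^t B >= delta (t-s). *)
Definition A_admissible (A B : R -> R) : Prop :=
  (exists M, forall t, Rabs (A t) <= M) /\
  (exists L, forall s t, Rabs (A t - A s) <= L * Rabs (t - s)) /\
  (exists delta, 0 < delta /\
     forall s t, s <= t -> delta * (t - s) <= A t - A s + Rint B s t).

(* Main.v *)
Require Import Defs.
From Stdlib Require Import Reals ZArith Lra Lia Classical ClassicalEpsilon FunctionalExtensionality.
From Coquelicot Require Coquelicot.
Open Scope R_scope.

Module Aux.
Import Coquelicot.Coquelicot.
Open Scope R_scope.

Lemma cont_ex_RInt (g : R -> R) a b : (forall x, continuity_pt g x) -> ex_RInt g a b.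
Proof.
  intros H. apply (ex_RInt_continuous (V:=R_CompleteNormedModule)). intros z _. apply continuity_pt_filterlim, H.
Qed.

Lemma Rint_RInt (g : R -> R) a b : (forall x, continuity_pt g x) -> Rint g a b = RInt g a b.
Proof.
  intros H. pose proof (ex_RInt_Reals_0 _ _ _ (cont_ex_RInt g a b H)) as pr.
  unfold Rint.
  destruct (epsilon_spec (inhabits 0) (fun I => exists pr : Riemann_integrable g a b, RiemannInt pr = I)) as [pr' Hpr'].
  - exists (RiemannInt pr). exists pr. reflexivity.
  - rewrite <- Hpr'. rewrite (RInt_Reals g a b pr'). reflexivity.
Qed.

Lemma FTC_Rint (g : R -> R) a t : (forall x, continuity_pt g x) ->
  derivable_pt_lim (fun x => Rint g a x) t (g t).
Proof.
  intros H. apply is_derive_Reals.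
  apply (is_derive_ext (fun x => RInt g a x)).
  { intros x. symmetry. apply Rint_RInt, H. }
  apply (is_derive_RInt (V:=R_NormedModule) g (fun x => RInt g a x) a t).
  - apply filter_forall. intros x. apply (RInt_correct (V:=R_CompleteNormedModule)), cont_ex_RInt, H.
  - apply continuity_pt_filterlim, H.
Qed.

Lemma Rint_point (g : R -> R) a : (forall x, continuity_pt g x) -> Rint g a a = 0.
Proof. intros H. rewrite Rint_RInt by exact H. apply (RInt_point (V:=R_CompleteNormedModule)). Qed.

Lemma Rint_le_const (g : R -> R) a b m : (forall x, continuity_pt g x) -> a <= b ->
  (forall x, a <= x <= b -> g x <= m) -> Rint g a b <= m * (b - a).
Proof.
  intros H Hab Hm. rewrite Rint_RInt by exact H.
  replace (m * (b - a)) with (RInt (fun _ => m) a b).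
  2:{ rewrite RInt_const. unfold scal; simpl; unfold mult; simpl. ring. }
  apply RInt_le; auto. apply cont_ex_RInt, H. apply ex_RInt_const.
  intros x Hx. apply Hm. lra.
Qed.

Definition theta (j : Z) : R := exp (IZR j) + exp (- IZR j).
Definition kap : R := exp 1 + exp (-1) - 2.

Lemma theta_pos j : 0 < theta j.
Proof. unfold theta. pose proof (exp_pos (IZR j)); pose proof (exp_pos (- IZR j)); lra. Qed.

Lemma theta_lap j : theta (j+1) + theta (j-1) = (kap + 2) * theta j.
Proof.
  unfold theta, kap. rewrite plus_IZR, minus_IZR.
  replace (- (IZR j + 1)) with (- IZR j + -1) by ring.
  replace (- (IZR j - 1)) with (- IZR j + 1) by ring.
  replace (IZR j - 1) with (IZR j + -1) by ring.
  rewrite !exp_plus. ring.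
Qed.

Lemma theta_ge j : 1 + Rabs (IZR j) <= theta j.
Proof.
  unfold theta. pose proof (exp_ineq1_le (IZR j)); pose proof (exp_ineq1_le (- IZR j)).
  pose proof (exp_pos (IZR j)); pose proof (exp_pos (- IZR j)).
  destruct (Rle_dec 0 (IZR j)).
  - rewrite Rabs_right by lra. lra.
  - rewrite Rabs_left by lra. lra.
Qed.

Lemma theta_big K eps : 0 < eps -> exists N : nat, forall j, (Z.of_nat N < Z.abs j)%Z -> K < eps * theta j.
Proof.
  intros He. destruct (archimed (K / eps)) as [H1 _].
  exists (Z.to_nat (up (K/eps))). intros j Hj.
  assert (Hz : (up (K/eps) < Z.abs j)%Z).
  { destruct (Z_lt_le_dec (up (K/eps)) 0); lia. }
  apply IZR_lt in Hz. rewrite abs_IZR in Hz.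
  pose proof (theta_ge j).
  assert (K / eps < theta j) by lra.
  apply (Rmult_lt_compat_l eps) in H0; auto.
  replace (eps * (K/eps)) with K in H0 by (field; lra). exact H0.
Qed.

Fixpoint Mx (F : Z -> R) (n : nat) : R :=
  match n with
  | O => F 0%Z
  | S m => Rmax (Mx F m) (Rmax (F (Z.of_nat (S m))) (F (- Z.of_nat (S m))%Z))
  end.

Lemma Mx_ge F n j : (Z.abs j <= Z.of_nat n)%Z -> F j <= Mx F n.
Proof.
  induction n as [|n IH]; intros Hj; simpl.
  - assert (j = 0%Z) by lia. subst. lra.
  - destruct (Z_le_dec (Z.abs j) (Z.of_nat n)).
    + eapply Rle_trans; [apply IH; auto|apply Rmax_l].
    + eapply Rle_trans; [|apply Rmax_r].
      assert (j = Z.of_nat (S n) \/ j = (- Z.of_nat (S n))%Z) as [->| ->] by lia.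
      * apply Rmax_l.
      * apply Rmax_r.
Qed.

Lemma Mx_att F n : exists j, (Z.abs j <= Z.of_nat n)%Z /\ Mx F n = F j.
Proof.
  induction n as [|n [j [Hj Hm]]]; simpl.
  - exists 0%Z. split; auto. lia.
  - unfold Rmax at 1. destruct (Rle_dec (Mx F n) _).
    + unfold Rmax. destruct (Rle_dec _ _).
      * exists (- Z.of_nat (S n))%Z. split; [lia|reflexivity].
      * exists (Z.of_nat (S n)). split; [lia|reflexivity].
    + exists j. split; [lia|auto].
Qed.

Lemma Rmax_lip a b c d : Rabs (Rmax a b - Rmax c d) <= Rmax (Rabs (a - c)) (Rabs (b - d)).
Proof.
  pose proof (Rmax_l (Rabs (a-c)) (Rabs (b-d))). pose proof (Rmax_r (Rabs (a-c)) (Rabs (b-d))).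
  pose proof (Rle_abs (a-c)). pose proof (Rle_abs (b-d)).
  pose proof (Rle_abs (c-a)). pose proof (Rle_abs (d-b)).
  rewrite (Rabs_minus_sym c a) in *. rewrite (Rabs_minus_sym d b) in *.
  destruct (Rle_or_lt a b); [rewrite (Rmax_right a b) by lra | rewrite (Rmax_left a b) by lra];
  (destruct (Rle_or_lt c d); [rewrite (Rmax_right c d) by lra | rewrite (Rmax_left c d) by lra]);
  apply Rabs_le; split; lra.
Qed.

Definition cw (g : R -> R) (s T t : R) : Prop :=
  forall eps, 0 < eps -> exists del, 0 < del /\
    forall x, s <= x <= T -> Rabs (x - t) < del -> Rabs (g x - g t) < eps.

Lemma cw_max (g h : R -> R) s T t : cw g s T t -> cw h s T t -> cw (fun x => Rmax (g x) (h x)) s T t.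
Proof.
  intros Hg Hh eps He. destruct (Hg eps He) as [d1 [Hd1 H1]]. destruct (Hh eps He) as [d2 [Hd2 H2]].
  exists (Rmin d1 d2). split. { apply Rmin_pos; auto. }
  intros x Hx Hxt. eapply Rle_lt_trans. apply Rmax_lip.
  apply Rmax_lub_lt. apply H1; auto. pose proof (Rmin_l d1 d2); lra.
  apply H2; auto. pose proof (Rmin_r d1 d2); lra.
Qed.

Lemma Mx_cw (Z0 : R -> Z -> R) s T t n : (forall j, cw (fun x => Z0 x j) s T t) ->
  cw (fun x => Mx (Z0 x) n) s T t.
Proof.
  intros H. induction n as [|n IH]; simpl.
  - apply H.
  - apply cw_max; auto. apply cw_max; apply H.
Qed.

Lemma deriv_left_nonneg (g : R -> R) x l s : derivable_pt_lim g x l -> s < x ->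
  (forall y, s <= y < x -> g y <= g x) -> 0 <= l.
Proof.
  intros Hd Hs Hy. destruct (Rle_dec 0 l) as [|Hl]; auto. exfalso.
  assert (He : 0 < - l / 2) by lra.
  destruct (Hd (- l / 2) He) as [del Hdel].
  set (h := - Rmin (del / 2) ((x - s) / 2)).
  assert (Hh1 : 0 < Rmin (del/2) ((x-s)/2)). { apply Rmin_pos; pose proof (cond_pos del); lra. }
  assert (Hh2 : Rmin (del/2) ((x-s)/2) <= del/2) by apply Rmin_l.
  assert (Hh3 : Rmin (del/2) ((x-s)/2) <= (x-s)/2) by apply Rmin_r.
  assert (Hh : h <> 0) by (unfold h; lra).
  assert (Ha : Rabs h < del). { unfold h. rewrite Rabs_Ropp, Rabs_right by lra. pose proof (cond_pos del); lra. }
  specialize (Hdel h Hh Ha).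
  assert (Hq : 0 <= (g (x + h) - g x) / h).
  { assert (g (x + h) - g x <= 0). { pose proof (Hy (x + h)). unfold h in *. lra. }
    unfold Rdiv. replace ((g (x + h) - g x) * / h) with ((g x - g (x + h)) * / (- h)).
    2:{ field. auto. } apply Rmult_le_pos. lra. left. apply Rinv_0_lt_compat. unfold h; lra. }
  unfold Rabs in Hdel. destruct Rcase_abs in Hdel; lra.
Qed.

Lemma cont_left_le (g : R -> R) x s : continuity_pt g x -> s < x ->
  (forall y, s <= y < x -> g y < 0) -> g x <= 0.
Proof.
  intros Hc Hs Hy. destruct (Rle_dec (g x) 0) as [|Hn]; auto. exfalso.
  destruct (Hc (g x) ltac:(lra)) as [del [Hdel H]].
  set (y := x - Rmin (del/2) ((x-s)/2)).
  assert (Hh1 : 0 < Rmin (del/2) ((x-s)/2)). { apply Rmin_pos; lra. }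
  assert (Hh2 : Rmin (del/2) ((x-s)/2) <= del/2) by apply Rmin_l.
  assert (Hh3 : Rmin (del/2) ((x-s)/2) <= (x-s)/2) by apply Rmin_r.
  assert (Hy1 : g y < 0) by (apply Hy; unfold y; lra).
  assert (Hd : R_dist (g y) (g x) < g x).
  { apply H. split. unfold D_x, no_cond. split; auto. unfold y; lra.
    change (Rabs (y - x) < del). unfold y. rewrite Rabs_left by lra. lra. }
  change (Rabs (g y - g x) < g x) in Hd. rewrite Rabs_left in Hd by lra. lra.
Qed.

Lemma dpl_cont (g : R -> R) x l : derivable_pt_lim g x l -> continuity_pt g x.
Proof. intros H. apply derivable_continuous_pt. exists l. exact H. Qed.

Lemma cont_cw (g : R -> R) s T t : continuity_pt g t -> cw g s T t.
Proof.
  intros Hc eps He. destruct (Hc eps He) as [del [Hdel H]]. exists del. split; auto.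
  intros x Hx Hxt. destruct (Req_dec x t) as [->|Hne].
  - rewrite Rminus_diag, Rabs_R0. auto.
  - apply H. split. split; auto. unfold no_cond; auto. auto.
Qed.

Lemma dexp_lin g s x : derivable_pt_lim (fun t => exp (g * (t - s))) x (g * exp (g * (x - s))).
Proof.
  apply is_derive_Reals. auto_derive. auto. replace (x + - s) with (x - s) by ring. ring.
Qed.

Lemma dpl_sub (f1 f2 : R -> R) x l1 l2 : derivable_pt_lim f1 x l1 -> derivable_pt_lim f2 x l2 ->
  derivable_pt_lim (fun y => f1 y - f2 y) x (l1 - l2).
Proof. intros. apply (derivable_pt_lim_minus f1 f2); auto. Qed.
Lemma dpl_add (f1 f2 : R -> R) x l1 l2 : derivable_pt_lim f1 x l1 -> derivable_pt_lim f2 x l2 ->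
  derivable_pt_lim (fun y => f1 y + f2 y) x (l1 + l2).
Proof. intros. apply (derivable_pt_lim_plus f1 f2); auto. Qed.
Lemma dpl_scal (f1 : R -> R) c x l1 : derivable_pt_lim f1 x l1 ->
  derivable_pt_lim (fun y => c * f1 y) x (c * l1).
Proof. intros. apply (derivable_pt_lim_scal f1); auto. Qed.
Lemma dpl_ext (f1 f2 : R -> R) x l1 l2 : (forall y, f1 y = f2 y) -> l1 = l2 -> derivable_pt_lim f1 x l1 ->
  derivable_pt_lim f2 x l2.
Proof. intros He -> H. intros e He'. destruct (H e He') as [d Hd]. exists d. intros h Hh Hh'.
  rewrite <- !He. auto. Qed.
Lemma dpl_exp_comp (f1 : R -> R) x l1 : derivable_pt_lim f1 x l1 ->
  derivable_pt_lim (fun y => exp (f1 y)) x (exp (f1 x) * l1).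
Proof. intros H. apply (derivable_pt_lim_comp f1 exp); auto. apply derivable_pt_lim_exp. Qed.

Lemma cmp s T Lam K (z : R -> Z -> R) :
  s <= T -> 0 <= Lam ->
  (forall j, z s j <= 0) ->
  (forall t j, s <= t <= T -> z t j <= K) ->
  (forall j eps, 0 < eps -> exists del, 0 < del /\
      forall t, s <= t < s + del -> Rabs (z t j - z s j) < eps) ->
  (forall j t, s < t <= T -> exists l, derivable_pt_lim (fun x => z x j) t l /\
      (0 < z t j -> l <= z t (j+1)%Z + z t (j-1)%Z - 2 * z t j + Lam * z t j)) ->
  forall t j, s <= t <= T -> z t j <= 0.
Proof.
  intros HsT HL H0 HK Hrc Hd t1 j0 Ht1. pose proof Ht1 as [Ht1a Ht1b].
  destruct (Rle_dec (z t1 j0) 0) as [|Hpos]; auto. exfalso. apply Rnot_le_lt in Hpos.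
  set (g := kap + Lam + 1).
  assert (Hkap : 0 < kap). { unfold kap. pose proof (exp_ineq1_le 1); pose proof (exp_ineq1_le (-1)).
     assert (exp 1 <> 1 + 1). { intro. pose proof (exp_ineq1 1 ltac:(lra)). lra. } lra. }
  assert (Hg : 0 < g) by (unfold g; lra).
  set (eps := z t1 j0 / (2 * exp (g * (t1 - s)) * theta j0)).
  assert (Hth0 := theta_pos j0). assert (He1 := exp_pos (g * (t1 - s))).
  assert (Heps : 0 < eps). { unfold eps. apply Rdiv_lt_0_compat; auto. apply Rmult_lt_0_compat; lra. }
  set (Zf := fun t j => z t j - eps * exp (g * (t - s)) * theta j).
  assert (Hexp1 : forall t, s <= t -> 1 <= exp (g * (t - s))).
  { intros t Ht. pose proof (exp_ineq1_le (g * (t - s))). assert (0 <= g * (t-s)) by (apply Rmult_le_pos; lra). lra. }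
  destruct (theta_big K eps Heps) as [N HN].
  assert (Hout : forall t j, s <= t <= T -> (Z.of_nat N < Z.abs j)%Z -> Zf t j < 0).
  { intros t j Ht Hj. unfold Zf. specialize (HN j Hj). specialize (HK t j Ht).
    pose proof (Hexp1 t (proj1 Ht)). pose proof (theta_pos j).
    assert (eps * theta j <= eps * exp (g * (t - s)) * theta j).
    { rewrite Rmult_assoc. rewrite <- (Rmult_1_l (theta j)) at 1. apply Rmult_le_compat_l; [lra|].
      apply Rmult_le_compat_r; lra. }
    lra. }
  set (M := fun t => Mx (Zf t) N).
  assert (Hin : forall t j, (Z.abs j <= Z.of_nat N)%Z -> Zf t j <= M t).
  { intros t j Hj. apply Mx_ge. auto. }
  assert (Hall : forall t j, s <= t <= T -> Zf t j <= Rmax (M t) (-1) \/ Zf t j < 0).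
  { intros t j Ht. destruct (Z_le_dec (Z.abs j) (Z.of_nat N)).
    - left. eapply Rle_trans; [apply Hin; auto|apply Rmax_l].
    - right. apply Hout; auto. lia. }
  assert (HcwZ : forall t j, s <= t <= T -> cw (fun x => Zf x j) s T t).
  { intros t j Ht. destruct (Rle_lt_or_eq_dec s t (proj1 Ht)) as [Hst|Hst].
    - destruct (Hd j t (conj Hst (proj2 Ht))) as [l [Hl _]].
      apply cont_cw. unfold Zf. apply continuity_pt_minus.
      + eapply dpl_cont; exact Hl.
      + apply continuity_pt_mult. apply continuity_pt_mult. apply continuity_pt_const. intros a b; auto.
        eapply dpl_cont. apply dexp_lin. apply continuity_pt_const. intros a b; auto.
    - subst t. intros e He.
      assert (Hc2 : continuity_pt (fun x => eps * exp (g * (x - s)) * theta j) s).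
      { apply continuity_pt_mult. apply continuity_pt_mult. apply continuity_pt_const. intros a b; auto.
        eapply dpl_cont. apply dexp_lin. apply continuity_pt_const. intros a b; auto. }
      destruct (Hrc j (e/2) ltac:(lra)) as [d1 [Hd1 H1]].
      destruct (Hc2 (e/2) ltac:(lra)) as [d2 [Hd2 H2]].
      exists (Rmin d1 d2). split. apply Rmin_pos; auto.
      intros x Hx Hxs. pose proof (Rmin_l d1 d2). pose proof (Rmin_r d1 d2).
      rewrite Rabs_right in Hxs by lra.
      specialize (H1 x ltac:(lra)).
      assert (H2' : Rabs (eps * exp (g * (x - s)) * theta j - eps * exp (g * (s - s)) * theta j) < e/2).
      { destruct (Req_dec x s) as [->|Hne]. rewrite Rminus_diag, Rabs_R0; lra.
        apply H2. split. split; [unfold no_cond; auto|auto]. change (Rabs (x - s) < d2). rewrite Rabs_right; lra. }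
      unfold Zf. unfold Rabs in *. repeat destruct Rcase_abs; lra. }
  assert (HcwM : forall t, s <= t <= T -> cw M s T t).
  { intros t Ht. unfold M. apply Mx_cw. intros j. apply HcwZ; auto. }
  assert (HMs : M s < 0).
  { destruct (Mx_att (Zf s) N) as [j [_ Hj]]. unfold M. rewrite Hj. unfold Zf.
    specialize (H0 j). pose proof (theta_pos j) as Ha. pose proof (exp_pos (g * (s - s))) as Hb.
    pose proof (Rmult_lt_0_compat _ _ (Rmult_lt_0_compat _ _ Heps Hb) Ha). lra. }
  assert (HZt1 : 0 < Zf t1 j0).
  { unfold Zf. assert (eps * exp (g * (t1 - s)) * theta j0 = z t1 j0 / 2) by (unfold eps; field; lra). lra. }
  assert (HMt1 : 0 < M t1).
  { destruct (Z_le_dec (Z.abs j0) (Z.of_nat N)).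
    - eapply Rlt_le_trans; [exact HZt1| apply Hin; auto].
    - pose proof (Hout t1 j0 Ht1 ltac:(lia)). lra. }
  set (E := fun tau => s <= tau /\ forall x, s <= x <= tau -> M x < 0).
  assert (HEb : bound E).
  { exists t1. intros tau [Hs Ht]. destruct (Rle_dec tau t1) as [|Hn]; auto.
    specialize (Ht t1 ltac:(lra)). lra. }
  assert (HEn : exists x, E x).
  { exists s. split. lra. intros x Hx. replace x with s by lra. auto. }
  clear HEn. assert (HEn : exists x, E x) by (exists s; split; [lra| intros x Hx; replace x with s by lra; auto]).
  destruct (completeness E HEb HEn) as [ts [Hub Hlub]].
  assert (Hsts : s <= ts). { apply Hub. unfold E. split. lra. intros x Hx. replace x with s by lra. auto. }
  assert (Htst1 : ts <= t1). { apply Hlub. intros tau [Hs Ht]. destruct (Rle_dec tau t1) as [|Hn]; auto.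
    specialize (Ht t1 ltac:(lra)). lra. }
  assert (HA : forall x, s <= x < ts -> M x < 0).
  { intros x Hx. destruct (Rlt_dec (M x) 0) as [|Hn]; auto. exfalso.
    assert (ts <= x). { apply Hlub. intros tau [Hs Ht]. destruct (Rle_dec tau x) as [|Hn2]; auto.
      specialize (Ht x ltac:(lra)). lra. } lra. }
  assert (HB : 0 <= M ts).
  { destruct (Rle_dec 0 (M ts)) as [|Hn]; auto. exfalso. apply Rnot_le_lt in Hn.
    assert (Htst1' : ts < t1). { destruct (Rle_lt_or_eq_dec _ _ Htst1); auto. subst ts. lra. }
    destruct (HcwM ts ltac:(lra) (- M ts) ltac:(lra)) as [del [Hdel Hc]].
    set (tau := ts + Rmin (del/2) ((t1 - ts)/2)).
    assert (Hm1 : 0 < Rmin (del/2) ((t1 - ts)/2)) by (apply Rmin_pos; lra).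
    pose proof (Rmin_l (del/2) ((t1 - ts)/2)). pose proof (Rmin_r (del/2) ((t1 - ts)/2)).
    assert (E tau).
    { split. unfold tau; lra. intros x Hx. destruct (Rlt_dec x ts). apply HA; lra.
      assert (Hxx : Rabs (M x - M ts) < - M ts). { apply Hc. unfold tau in Hx; lra.
        rewrite Rabs_right; unfold tau in Hx; lra. }
      unfold Rabs in Hxx; destruct Rcase_abs in Hxx; lra. }
    specialize (Hub tau H2). unfold tau in Hub. lra. }
  assert (HC : s < ts). { destruct (Rle_lt_or_eq_dec _ _ Hsts); auto. subst ts. lra. }
  destruct (Mx_att (Zf ts) N) as [j [Hj HMj]].
  fold (M ts) in HMj.
  assert (HEj : forall x, s <= x < ts -> Zf x j < 0).
  { intros x Hx. eapply Rle_lt_trans; [apply Hin; auto|apply HA; auto]. }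
  assert (HtsT : ts <= T) by lra.
  destruct (Hd j ts (conj HC HtsT)) as [l [Hl Hineq]].
  set (Et := eps * exp (g * (ts - s))).
  assert (HdZ : derivable_pt_lim (fun x => Zf x j) ts (l - (eps * theta j) * (g * exp (g * (ts - s))))).
  { apply dpl_ext with (f1 := fun x => z x j - (eps * theta j) * exp (g * (x - s)))
       (l1 := l - (eps * theta j) * (g * exp (g * (ts - s)))).
    intros y. unfold Zf. ring. reflexivity.
    apply dpl_sub; auto. apply dpl_scal, dexp_lin. }
  assert (HZle : Zf ts j <= 0) by (apply (cont_left_le (fun x => Zf x j) ts s); [eapply dpl_cont; exact HdZ| exact HC| exact HEj]).
  assert (HZ0 : Zf ts j = 0) by lra.
  assert (Hl0 : 0 <= l - (eps * theta j) * (g * exp (g * (ts - s)))).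
  { apply (deriv_left_nonneg (fun x => Zf x j) ts _ s). exact HdZ. exact HC. intros y Hy. specialize (HEj y Hy). lra. }
  assert (HP : 0 < Et * theta j) by (unfold Et; pose proof (theta_pos j); pose proof (exp_pos (g * (ts - s)));
     apply Rmult_lt_0_compat; [apply Rmult_lt_0_compat|]; lra).
  assert (Hz : forall i, z ts i = Zf ts i + Et * theta i) by (intros i; unfold Zf, Et; ring).
  assert (Hzpos : 0 < z ts j) by (rewrite Hz; lra).
  specialize (Hineq Hzpos).
  assert (Hnb : forall i, Zf ts i <= 0).
  { intros i. destruct (Hall ts i (conj (Rlt_le _ _ HC) HtsT)) as [Hi|Hi]; [|lra].
    rewrite HMj, HZ0 in Hi. rewrite Rmax_left in Hi by lra. exact Hi. }
  rewrite !Hz in Hineq. pose proof (theta_lap j) as Hlap.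
  pose proof (Hnb (j+1)%Z). pose proof (Hnb (j-1)%Z).
  assert (Hx1 : Et * theta (j+1)%Z + Et * theta (j-1)%Z = (kap + 2) * (Et * theta j)) by (rewrite <- Rmult_plus_distr_l, Hlap; ring).
  assert (Hx2 : (eps * theta j) * (g * exp (g * (ts - s))) = g * (Et * theta j)) by (unfold Et; ring).
  rewrite Hx2 in Hl0. rewrite HZ0 in Hineq. unfold g in Hl0.
  nra.
Qed.

Lemma cont_affine (g : R -> R) p q t : continuity_pt g t -> continuity_pt (fun x => p * g x + q) t.
Proof.
  intros Hc e He. destruct (Hc (e / (Rabs p + 1))) as [d [Hd H]].
  { apply Rdiv_lt_0_compat; auto. pose proof (Rabs_pos p); lra. }
  exists d. split; auto. intros x Hx. specialize (H x Hx).
  change (Rabs (g x - g t) < e / (Rabs p + 1)) in H.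
  change (Rabs ((p * g x + q) - (p * g t + q)) < e).
  replace (p * g x + q - (p * g t + q)) with (p * (g x - g t)) by ring.
  rewrite Rabs_mult. pose proof (Rabs_pos p). pose proof (Rabs_pos (g x - g t)).
  apply Rmult_lt_compat_l with (r := Rabs p + 1) in H; [|lra].
  replace ((Rabs p + 1) * (e / (Rabs p + 1))) with e in H by (field; lra). nra.
Qed.

Lemma cont_ext (g1 g2 : R -> R) t : (forall x, g1 x = g2 x) -> continuity_pt g1 t -> continuity_pt g2 t.
Proof. intros He H. replace g2 with g1; auto. apply functional_extensionality; auto. Qed.

Lemma rpow_small L al e : 0 <= L -> 0 < al -> 0 < e -> exists eta, 0 < eta /\
  forall y, 0 < y < eta -> L * Rpower y al < e.
Proof.
  intros HL Hal He. exists (Rpower (e / (L+1)) (/ al)). split. unfold Rpower. apply exp_pos.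
  intros y Hy. assert (Hle : Rpower y al <= Rpower (Rpower (e / (L+1)) (/ al)) al).
  { apply Rle_Rpower_l; lra. }
  rewrite Rpower_mult, Rinv_l, Rpower_1 in Hle by (try apply Rdiv_lt_0_compat; lra).
  assert (L * Rpower y al <= L * (e / (L+1))) by (apply Rmult_le_compat_l; auto).
  assert (L * (e / (L+1)) < e). { apply Rmult_lt_reg_r with (L+1). lra.
    replace (L * (e / (L + 1)) * (L + 1)) with (L * e) by (field; lra). nra. }
  lra.
Qed.

Lemma a_cont f fu M0 : H0 f fu M0 -> forall t, continuity_pt (fun x => f x 0) t.
Proof.
  intros Hf t. destruct Hf as [Hh _].
  destruct (Hh (Rabs t + 1)) as [al [L [[Hal _] [HL H]]]]. { pose proof (Rabs_pos t); lra. }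
  intros e He. destruct (rpow_small L al e HL Hal He) as [eta [Heta Hs]].
  exists (Rmin eta 1). split. apply Rmin_pos; lra.
  intros x [[_ Hxt] Hx]. change (Rabs (x - t) < Rmin eta 1) in Hx. change (Rabs (f x 0 - f t 0) < e).
  pose proof (Rmin_l eta 1). pose proof (Rmin_r eta 1).
  assert (Hxt' : 0 < Rabs (x - t)) by (apply Rabs_pos_lt; lra).
  eapply Rle_lt_trans. apply H.
  - pose proof (Rabs_triang_inv x t). lra.
  - lra.
  - rewrite Rabs_R0. pose proof (Rabs_pos t); lra.
  - apply Hs. lra.
Qed.

Definition Ef (m : R) := exp (- m) + exp m - 2.

Lemma c_cont f fu M0 mu : H0 f fu M0 -> forall t, continuity_pt (cfun f mu) t.
Proof.
  intros Hf t. apply cont_ext with (g1 := fun x => (/ mu) * f x 0 + Ef mu / mu).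
  { intros x. unfold cfun, speed, Ef. unfold Rdiv. ring. }
  apply cont_affine. eapply a_cont; eauto.
Qed.

Lemma B_cont f fu M0 mu mut : H0 f fu M0 -> forall t, continuity_pt (Bfun f mu mut) t.
Proof.
  intros Hf t. apply cont_ext with (g1 := fun x => (mut / mu - 1) * f x 0 + (- Ef mut + Ef mu / mu * mut)).
  { intros x. unfold Bfun, cfun, speed, Ef. unfold Rdiv. ring. }
  apply cont_affine. eapply a_cont; eauto.
Qed.

Lemma f_decr f fu M0 : H0 f fu M0 -> forall t x, 0 <= x -> f t x <= f t 0.
Proof.
  intros Hf t x Hx. destruct Hf as [_ [Hlip [Hd [_ [_ [_ [Hneg _]]]]]]].
  destruct (Req_dec x 0) as [->|Hx0]; [lra|].
  destruct (Hlip (x + 1)) as [L [HL HLi]]. lra.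
  destruct (Rle_dec (f t x) (f t 0)) as [|Hn]; auto. exfalso. apply Rnot_le_lt in Hn.
  set (e := Rmin (x / 2) ((f t x - f t 0) / (2 * (L + 1)))).
  assert (He : 0 < e) by (apply Rmin_pos; apply Rdiv_lt_0_compat; lra).
  assert (He1 : e <= x/2) by apply Rmin_l. assert (He2 : e <= (f t x - f t 0) / (2 * (L + 1))) by apply Rmin_r.
  destruct (MVT_cor2 (f t) (fu t) e x ltac:(lra)) as [c [Hc1 Hc2]].
  { intros c Hc. apply Hd. lra. }
  assert (fu t c < 0) by (apply Hneg; lra).
  assert (f t x - f t e < 0). { rewrite Hc1. nra. }
  assert (Hl : Rabs (f t e - f t 0) <= L * Rabs (e - 0)) by (apply HLi; rewrite ?Rabs_R0; try rewrite Rabs_right; lra).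
  rewrite Rminus_0_r, Rabs_right in Hl by lra.
  assert (L * e <= L * ((f t x - f t 0) / (2 * (L + 1)))) by (apply Rmult_le_compat_l; lra).
  assert (L * ((f t x - f t 0) / (2 * (L + 1))) <= (f t x - f t 0) / 2).
  { unfold Rdiv. rewrite Rinv_mult. 
    replace (L * ((f t x - f t 0) * (/ 2 * / (L + 1)))) with ((f t x - f t 0) / 2 * (L / (L+1))) by (field; lra).
    assert (L / (L+1) <= 1). { apply Rmult_le_reg_r with (L+1). lra. unfold Rdiv. rewrite Rmult_assoc, Rinv_l by lra. lra. }
    assert (0 <= (f t x - f t 0) / 2) by lra. nra. }
  unfold Rabs in Hl. destruct Rcase_abs in Hl; lra.
Qed.

Lemma uf_le f fu M0 : H0 f fu M0 -> forall t x, x * f t x <= x * f t 0.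
Proof.
  intros Hf t x. destruct (Rle_dec 0 x).
  - apply Rmult_le_compat_l; auto. eapply f_decr; eauto.
  - destruct Hf as [_ [_ [_ [_ [Hle _]]]]]. rewrite Hle by lra. lra.
Qed.

Lemma subsol d d1 del L2 Ca al x mu mut :
  0 < d <= 2 -> 0 < del -> 0 <= L2 -> 0 < mu -> mu < mut < 2 * mu -> - Ca <= al ->
  Rmax (2 * exp Ca) (4 * L2 * exp Ca / del) <= d1 ->
  0 < d * exp (- mu * x) - d1 * exp (al - mut * x) ->
  0 < x /\ d * exp (- mu * x) - d1 * exp (al - mut * x) <= 2 /\
  L2 * (d * exp (- mu * x) - d1 * exp (al - mut * x)) * (d * exp (- mu * x) - d1 * exp (al - mut * x))
    <= d1 * del * exp (al - mut * x).
Proof.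
  intros [Hd Hd'] Hdel HL2 Hmu [Hmut Hmut'] Hal Hd1 Hv.
  pose proof (Rmax_l (2 * exp Ca) (4 * L2 * exp Ca / del)) as Hm1.
  pose proof (Rmax_r (2 * exp Ca) (4 * L2 * exp Ca / del)) as Hm2.
  assert (Hsplit : exp (al - mut * x) = exp al * exp (- mut * x)) by (rewrite <- exp_plus; f_equal; ring).
  assert (Hea : exp (- Ca) <= exp al) by (apply exp_le_inv in Hal || (destruct (Rle_lt_or_eq_dec _ _ Hal) as [h|h]; [left; apply exp_increasing; auto| rewrite h; lra])).
  assert (HeC : exp Ca * exp (- Ca) = 1) by (rewrite <- exp_plus; replace (Ca + - Ca) with 0 by ring; apply exp_0).
  pose proof (exp_pos Ca). pose proof (exp_pos (- Ca)). pose proof (exp_pos al).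
  pose proof (exp_pos (- mu * x)). pose proof (exp_pos (- mut * x)).
  assert (Hx : 0 < x).
  { destruct (Rlt_dec 0 x) as [|Hn]; auto. exfalso.
    assert (exp (- mu * x) <= exp (- mut * x)).
    { destruct (Rle_lt_or_eq_dec (- mu * x) (- mut * x)) as [h|h]. nra. left; apply exp_increasing; auto. rewrite h; lra. }
    assert (2 <= d1 * exp al).
    { assert (2 * exp Ca * exp (- Ca) <= d1 * exp al). { apply Rmult_le_compat; nra. } nra. }
    rewrite Hsplit in Hv. nra. }
  assert (He1 : exp (- mu * x) < 1). { rewrite <- exp_0. apply exp_increasing. nra. }
  assert (Hd1p : 0 <= d1) by lra.
  assert (Hpsi : 0 <= d1 * exp (al - mut * x)) by (apply Rmult_le_pos; [lra| left; apply exp_pos]).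
  split; auto. split. { assert (d * exp (- mu * x) <= d * 1) by (apply Rmult_le_compat_l; lra). lra. }
  assert (Hsq : exp (- mu * x) * exp (- mu * x) <= exp (- mut * x)).
  { rewrite <- exp_plus. destruct (Rle_lt_or_eq_dec (- mu * x + - mu * x) (- mut * x)) as [h|h]. nra.
    left; apply exp_increasing; auto. rewrite h; lra. }
  set (v := d * exp (- mu * x) - d1 * exp (al - mut * x)) in *.
  assert (Hv2 : v * v <= 4 * exp (- mut * x)).
  { assert (v <= d * exp (- mu * x)) by (unfold v; lra). assert (v * v <= (d * exp (- mu * x)) * (d * exp (- mu * x))) by nra.
    assert (d * d <= 4) by nra.
    assert (d * d * (exp (- mu * x) * exp (- mu * x)) <= 4 * (exp (- mu * x) * exp (- mu * x))).
    { apply Rmult_le_compat_r; [|lra]. apply Rmult_le_pos; lra. }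
    nra. }
  assert (HL : 4 * L2 * exp (- mut * x) <= d1 * del * exp (al - mut * x)).
  { rewrite Hsplit.
    assert (4 * L2 * exp Ca / del * del * exp (- Ca) <= d1 * del * exp al).
    { apply Rmult_le_compat; try nra. apply Rmult_le_pos. unfold Rdiv. apply Rmult_le_pos. nra. left; apply Rinv_0_lt_compat; lra. lra. }
    assert (4 * L2 * exp Ca / del * del * exp (- Ca) = 4 * L2) by (field_simplify; [| lra]; unfold Rdiv; rewrite <- HeC at 1 || idtac; nra).
    nra. }
  nra.
Qed.


Section S.
Variables (f fu : R -> R -> R) (M0 : R) (Hf : H0 f fu M0) (mu : R) (Hmu : 0 < mu).

Definition Cf (t : R) := Rint (cfun f mu) 0 t.
Definition prof (m : R) (al : R -> R) (t : R) (j : Z) := exp (al t - m * (IZR j - Cf t)).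

Lemma Cf_deriv t : derivable_pt_lim Cf t (cfun f mu t).
Proof. unfold Cf. apply FTC_Rint. intros x. eapply c_cont; eauto. Qed.

Lemma prof_deriv m al ald t j : derivable_pt_lim al t ald ->
  derivable_pt_lim (fun x => prof m al x j) t ((ald + m * cfun f mu t) * prof m al t j).
Proof.
  intros Hal. unfold prof.
  apply dpl_ext with (f1 := fun x => exp (al x - m * (IZR j - Cf x)))
    (l1 := exp (al t - m * (IZR j - Cf t)) * (ald - m * (0 - cfun f mu t))).
  reflexivity. ring. apply (dpl_exp_comp (fun x => al x - m * (IZR j - Cf x))).
  apply dpl_sub. exact Hal. apply dpl_scal. apply dpl_sub. apply derivable_pt_lim_const. apply Cf_deriv.
Qed.

Lemma prof_lap m al t j : prof m al t (j+1)%Z + prof m al t (j-1)%Z = (Ef m + 2) * prof m al t j.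
Proof.
  unfold prof, Ef. rewrite plus_IZR, minus_IZR.
  replace (al t - m * (IZR j + 1 - Cf t)) with ((al t - m * (IZR j - Cf t)) + - m) by ring.
  replace (al t - m * (IZR j - 1 - Cf t)) with ((al t - m * (IZR j - Cf t)) + m) by ring.
  rewrite !exp_plus. ring.
Qed.

Lemma phi_prof t j : phi f mu t j = prof mu (fun _ => 0) t j.
Proof. unfold phi, prof, Cf. f_equal. ring. Qed.

Lemma phi1_prof mut A t j : phi1 f mu mut A t j = prof mut A t j.
Proof. unfold phi1, prof, Cf. reflexivity. Qed.

Lemma muc t : mu * cfun f mu t = Ef mu + f t 0.
Proof. unfold cfun, speed, Ef. field. lra. Qed.

Definition At (mut del : R) (A : R -> R) (s x : R) := A s - Rint (Bfun f mu mut) s x + del * (x - s).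

Lemma At_deriv mut del A s x : derivable_pt_lim (At mut del A s) x (- Bfun f mu mut x + del).
Proof.
  unfold At. apply dpl_ext with (f1 := fun y => A s - Rint (Bfun f mu mut) s y + del * (y - s)) (l1 := 0 - Bfun f mu mut x + del * (1 - 0)).
  reflexivity. ring.
  apply dpl_add. apply dpl_sub. apply derivable_pt_lim_const. apply FTC_Rint. intros; eapply B_cont; eauto.
  apply dpl_scal. apply dpl_sub. apply derivable_pt_lim_id. apply derivable_pt_lim_const.
Qed.

Lemma At_s mut del A s : At mut del A s s = A s.
Proof. unfold At. rewrite Rint_point. ring. intros; eapply B_cont; eauto. Qed.

Lemma psi_coef mut del t : - Bfun f mu mut t + del + mut * cfun f mu t = Ef mut + f t 0 + del.
Proof. unfold Bfun, Ef. ring. Qed.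

Lemma sol_rc t0 u0 u : is_solution f t0 u0 u -> forall s j, t0 <= s ->
  forall eps, 0 < eps -> exists del, 0 < del /\ forall t, s <= t < s + del -> Rabs (u t j - u s j) < eps.
Proof.
  intros [Hi [_ [Hd Hrc]]] s j Hs eps He.
  destruct (Rle_lt_or_eq_dec _ _ Hs) as [Hlt|Heq].
  - pose proof (dpl_cont _ _ _ (Hd j s Hlt)) as Hc. destruct (Hc eps He) as [del [Hdel H]].
    exists del. split; auto. intros t Ht. destruct (Req_dec t s) as [->|Hne].
    + rewrite Rminus_diag, Rabs_R0; lra.
    + apply (H t). split. split; [unfold no_cond; auto|auto]. change (Rabs (t - s) < del). rewrite Rabs_right; lra.
  - subst s. destruct (Hrc j eps He) as [del [Hdel H]]. exists del. split; auto.
    intros t Ht. rewrite Hi. auto.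
Qed.

Lemma rc_combine (g1 g2 : R -> R) s : 
  (forall eps, 0 < eps -> exists del, 0 < del /\ forall t, s <= t < s + del -> Rabs (g1 t - g1 s) < eps) ->
  continuity_pt g2 s ->
  (forall eps, 0 < eps -> exists del, 0 < del /\ forall t, s <= t < s + del -> Rabs ((g1 t - g2 t) - (g1 s - g2 s)) < eps).
Proof.
  intros H1 H2 e He. destruct (H1 (e/2) ltac:(lra)) as [d1 [Hd1 K1]]. destruct (H2 (e/2) ltac:(lra)) as [d2 [Hd2 K2]].
  exists (Rmin d1 d2). split. apply Rmin_pos; auto. intros t Ht.
  pose proof (Rmin_l d1 d2). pose proof (Rmin_r d1 d2).
  specialize (K1 t ltac:(lra)).
  assert (K2' : Rabs (g2 t - g2 s) < e/2).
  { destruct (Req_dec t s) as [->|Hne]. rewrite Rminus_diag, Rabs_R0; lra.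
    apply K2. split. split; [unfold no_cond; auto|auto]. change (Rabs (t - s) < d2). rewrite Rabs_right; lra. }
  unfold Rabs in *. repeat destruct Rcase_abs; lra.
Qed.

End S.

Lemma upper f fu M0 (Hf : H0 f fu M0) mu (Hmu : 0 < mu) mut A del (Hdel : 0 < del)
  (Hadm : forall s t, s <= t -> del * (t - s) <= A t - A s + Rint (Bfun f mu mut) s t)
  d d1 (Hd : 0 <= d) (Hd1 : 0 <= d1) t0 u0 u (Hsol : is_solution f t0 u0 u) :
  (forall j, u0 j <= d * phi f mu t0 j + d1 * phi1 f mu mut A t0 j) ->
  forall t, t0 <= t -> forall j, u t j <= d * phi f mu t j + d1 * phi1 f mu mut A t j.
Proof.
  intros Hini t1 Ht1 j1.
  pose proof Hsol as [Hi [Hbd [Hder Hrc]]].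
  destruct (Hbd t1 Ht1) as [Mu HMu].
  destruct (continuity_ab_maj (fun x => f x 0) t0 t1 Ht1 (fun c _ => a_cont _ _ _ Hf c)) as [ta [Hta _]].
  set (Lam := Rmax 0 (f ta 0)).
  set (P := prof f mu mu (fun _ => 0)). set (Q := prof f mu mut (At f mu mut del A t0)).
  assert (HPd : forall t j, derivable_pt_lim (fun x => P x j) t ((0 + mu * cfun f mu t) * P t j)).
  { intros t j. apply (prof_deriv f fu M0 Hf). apply derivable_pt_lim_const. }
  assert (HQd : forall t j, derivable_pt_lim (fun x => Q x j) t ((- Bfun f mu mut t + del + mut * cfun f mu t) * Q t j)).
  { intros t j. apply (prof_deriv f fu M0 Hf). apply (At_deriv f fu M0 Hf). }
  assert (HSd : forall t j, derivable_pt_lim (fun x => d * P x j + d1 * Q x j) t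
     (d * ((0 + mu * cfun f mu t) * P t j) + d1 * ((- Bfun f mu mut t + del + mut * cfun f mu t) * Q t j))).
  { intros t j. apply dpl_add; apply dpl_scal; auto. }
  assert (Hz : forall t j, t0 <= t <= t1 -> u t j - (d * P t j + d1 * Q t j) <= 0).
  { apply (cmp t0 t1 Lam Mu (fun t j => u t j - (d * P t j + d1 * Q t j))).
    - exact Ht1.
    - apply Rmax_l.
    - intros j. rewrite Hi. specialize (Hini j).
      assert (E1 : phi f mu t0 j = P t0 j) by (unfold P; apply phi_prof).
      assert (E2 : phi1 f mu mut A t0 j = Q t0 j) by (unfold Q, prof; rewrite (At_s f fu M0 Hf); reflexivity).
      rewrite E1, E2 in Hini. lra.
    - intros t j Ht. specialize (HMu t j Ht). pose proof (Rle_abs (u t j)).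
      assert (0 < P t j) by (unfold P, prof; apply exp_pos). assert (0 < Q t j) by (unfold Q, prof; apply exp_pos).
      nra.
    - intros j. apply (rc_combine (fun t => u t j) (fun t => d * P t j + d1 * Q t j) t0).
      apply (sol_rc f t0 u0 u Hsol). lra. eapply dpl_cont. apply HSd.
    - intros j t Ht. eexists. split.
      + apply dpl_sub. apply Hder. lra. apply HSd.
      + intros Hzp. unfold lattice_rhs.
        rewrite (psi_coef f mu). replace (0 + mu * cfun f mu t) with (Ef mu + f t 0) by (rewrite (muc f mu Hmu); ring).
        assert (HP := prof_lap f mu mu (fun _ => 0) t j). assert (HQ := prof_lap f mu mut (At f mu mut del A t0) t j).
        fold P in HP. fold Q in HQ.
        assert (Huf := uf_le f fu M0 Hf t (u t j)).
        assert (Hlam : f t 0 <= Lam) by (eapply Rle_trans; [apply Hta; lra| apply Rmax_r]).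
        assert (Haz : f t 0 * (u t j - (d * P t j + d1 * Q t j)) <= Lam * (u t j - (d * P t j + d1 * Q t j))).
        { apply Rmult_le_compat_r; lra. }
        assert (0 < Q t j) by (unfold Q, prof; apply exp_pos).
        assert (0 <= d1 * del * Q t j) by (apply Rmult_le_pos; [apply Rmult_le_pos|]; lra).
        assert (HdP : d * (P t (j+1)%Z + P t (j-1)%Z) = d * ((Ef mu + 2) * P t j)) by (rewrite HP; ring).
        assert (HdQ : d1 * (Q t (j+1)%Z + Q t (j-1)%Z) = d1 * ((Ef mut + 2) * Q t j)) by (rewrite HQ; ring).
        lra. }
  specialize (Hz t1 j1 (conj Ht1 (Rle_refl _))).
  assert (E1 : phi f mu t1 j1 = P t1 j1) by (unfold P; apply phi_prof).
  rewrite E1, phi1_prof.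
  assert (Q t1 j1 <= prof f mu mut A t1 j1).
  { unfold Q, prof. assert (At f mu mut del A t0 t1 <= A t1) by (unfold At; specialize (Hadm t0 t1 Ht1); lra).
    destruct (Rle_lt_or_eq_dec _ _ H) as [h|h]. left; apply exp_increasing; lra. rewrite h; lra. }
  assert (d1 * Q t1 j1 <= d1 * prof f mu mut A t1 j1) by (apply Rmult_le_compat_l; auto).
  lra.
Qed.

Lemma upos f fu M0 (Hf : H0 f fu M0) t0 u0 u (Hsol : is_solution f t0 u0 u) :
  (forall j, 0 <= u0 j) -> forall t, t0 <= t -> forall j, 0 <= u t j.
Proof.
  intros Hu0 t1 Ht1 j1.
  pose proof Hsol as [Hi [Hbd [Hder Hrc]]].
  destruct (Hbd t1 Ht1) as [Mu HMu].
  destruct (continuity_ab_maj (fun x => f x 0) t0 t1 Ht1 (fun c _ => a_cont _ _ _ Hf c)) as [ta [Hta _]].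
  set (Lam := Rmax 0 (f ta 0)).
  assert (Hz : forall t j, t0 <= t <= t1 -> - u t j <= 0).
  { apply (cmp t0 t1 Lam Mu (fun t j => - u t j)).
    - exact Ht1.
    - apply Rmax_l.
    - intros j. rewrite Hi. specialize (Hu0 j). lra.
    - intros t j Ht. specialize (HMu t j Ht). pose proof (Rle_abs (- u t j)). rewrite Rabs_Ropp in *. lra.
    - intros j e He. destruct (sol_rc f t0 u0 u Hsol t0 j (Rle_refl _) e He) as [del [Hdel H]].
      exists del. split; auto. intros t Ht. specialize (H t Ht).
      replace (- u t j - - u t0 j) with (- (u t j - u t0 j)) by ring. rewrite Rabs_Ropp. auto.
    - intros j t Ht. exists (- lattice_rhs f t (u t) j). split.
      + apply (derivable_pt_lim_opp (fun x => u x j)). apply Hder. lra.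
      + intros Hp. unfold lattice_rhs.
        destruct Hf as [_ [_ [_ [_ [Hle _]]]]]. rewrite (Hle t (u t j)) by lra.
        assert (Hlam : f t 0 <= Lam) by (eapply Rle_trans; [apply Hta; lra| apply Rmax_r]).
        assert (f t 0 * (- u t j) <= Lam * (- u t j)) by (apply Rmult_le_compat_r; lra).
        lra. }
  specialize (Hz t1 j1 (conj Ht1 (Rle_refl _))). lra.
Qed.

Lemma lip_xf (f : R -> R -> R) t x y K L Fa : 0 <= L ->
  Rabs x <= K -> Rabs y <= K -> y <= x ->
  (forall a b, Rabs a <= K -> Rabs b <= K -> Rabs (f t a - f t b) <= L * Rabs (a - b)) ->
  Rabs (f t 0) <= Fa ->
  x * f t x - y * f t y <= (Fa + 2 * L * K) * (x - y).
Proof.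
  intros HL Hx Hy Hxy Hlip HF.
  assert (H0K : 0 <= K) by (pose proof (Rabs_pos x); lra).
  assert (H1 : Rabs (f t x - f t 0) <= L * Rabs (x - 0)).
  { apply Hlip; auto. rewrite Rabs_R0; lra. }
  rewrite Rminus_0_r in H1.
  assert (H2 : Rabs (f t x - f t y) <= L * Rabs (x - y)) by (apply Hlip; auto).
  rewrite (Rabs_right (x - y)) in H2 by lra.
  assert (f t x <= Fa + L * K).
  { assert (L * Rabs x <= L * K) by (apply Rmult_le_compat_l; auto).
    pose proof (Rle_abs (f t x - f t 0)). pose proof (Rle_abs (f t 0)). lra. }
  replace (x * f t x - y * f t y) with ((x - y) * f t x + y * (f t x - f t y)) by ring.
  assert ((x - y) * f t x <= (x - y) * (Fa + L * K)) by (apply Rmult_le_compat_l; lra).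
  assert (y * (f t x - f t y) <= Rabs y * Rabs (f t x - f t y)).
  { rewrite <- Rabs_mult. apply Rle_abs. }
  assert (Rabs y * Rabs (f t x - f t y) <= K * (L * (x - y))).
  { apply Rmult_le_compat; auto using Rabs_pos. }
  nra.
Qed.

Lemma nat_above x : exists n : nat, x <= INR n.
Proof.
  destruct (archimed x) as [H1 _]. destruct (Z_le_dec 0 (up x)).
  - exists (Z.to_nat (up x)). rewrite INR_IZR_INZ, Z2Nat.id by lia. lra.
  - exists 0%nat. simpl. assert (up x < 0)%Z by lia. apply IZR_lt in H. lra.
Qed.

Lemma lower_step f fu M0 (Hf : H0 f fu M0) mu (Hmu : 0 < mu) mut (Hmut : mu < mut < 2 * mu)
  A del (Hdel : 0 < del) MA (HMA : forall t, Rabs (A t) <= MA)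
  (Hadm : forall s t, s <= t -> del * (t - s) <= A t - A s + Rint (Bfun f mu mut) s t)
  L2 (HL2 : 0 <= L2) (HL2lip : forall t x y, Rabs x <= 2 -> Rabs y <= 2 -> Rabs (f t x - f t y) <= L2 * Rabs (x - y))
  d (Hd : 0 < d <= 2) d1 (Hd1 : Rmax (2 * exp (MA + 1)) (4 * L2 * exp (MA + 1) / del) <= d1)
  t0 u0 u (Hsol : is_solution f t0 u0 u) (Hu0 : forall j, 0 <= u0 j)
  s tau (Hs0 : t0 <= s) (Hst : s <= tau)
  (HBint : forall x, s <= x <= tau -> Rint (Bfun f mu mut) s x <= 1)
  (Hs : forall j, d * phi f mu s j - d1 * phi1 f mu mut A s j <= u s j) :
  forall j, d * phi f mu tau j - d1 * phi1 f mu mut A tau j <= u tau j.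
Proof.
  intros j1.
  pose proof Hsol as [Hi [Hbd [Hder Hrc]]].
  assert (Ht0tau : t0 <= tau) by lra.
  destruct (Hbd tau Ht0tau) as [Mu HMu].
  assert (HMu0 : 0 <= Mu) by (specialize (HMu t0 0%Z (conj (Rle_refl _) Ht0tau)); pose proof (Rabs_pos (u t0 0%Z)); lra).
  assert (Hupos : forall t j, t0 <= t -> 0 <= u t j) by (intros; eapply upos; eauto).
  destruct (continuity_ab_maj (fun x => f x 0) s tau Hst (fun c _ => a_cont _ _ _ Hf c)) as [tM [HtM _]].
  destruct (continuity_ab_min (fun x => f x 0) s tau Hst (fun c _ => a_cont _ _ _ Hf c)) as [tm [Htm _]].
  set (Fa := Rabs (f tM 0) + Rabs (f tm 0)).
  assert (HFa : forall t, s <= t <= tau -> Rabs (f t 0) <= Fa).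
  { intros t Ht. specialize (HtM t Ht). specialize (Htm t Ht). unfold Fa.
    pose proof (Rle_abs (f tM 0)). pose proof (Rle_abs (- f tm 0)). rewrite Rabs_Ropp in *.
    pose proof (Rabs_pos (f tM 0)). pose proof (Rabs_pos (f tm 0)).
    apply Rabs_le; lra. }
  set (K' := Mu + 2).
  destruct Hf as [Hh [Hlip Hrest]].
  destruct (Hlip K' ltac:(unfold K'; lra)) as [L' [HL' HL'lip]].
  assert (Hf : H0 f fu M0) by (split; [exact Hh| split; [exact Hlip| exact Hrest]]).
  set (Lam := Fa + 2 * L' * K').
  assert (HFa0 : 0 <= Fa) by (unfold Fa; pose proof (Rabs_pos (f tM 0)); pose proof (Rabs_pos (f tm 0)); lra).
  assert (HLam : 0 <= Lam) by (unfold Lam, K'; nra).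
  set (P := prof f mu mu (fun _ => 0)). set (Q := prof f mu mut (At f mu mut del A s)).
  assert (HPd : forall t j, derivable_pt_lim (fun x => P x j) t ((0 + mu * cfun f mu t) * P t j)).
  { intros t j. apply (prof_deriv f fu M0 Hf). apply derivable_pt_lim_const. }
  assert (HQd : forall t j, derivable_pt_lim (fun x => Q x j) t ((- Bfun f mu mut t + del + mut * cfun f mu t) * Q t j)).
  { intros t j. apply (prof_deriv f fu M0 Hf). apply (At_deriv f fu M0 Hf). }
  assert (HSd : forall t j, derivable_pt_lim (fun x => d * P x j - d1 * Q x j) t
     (d * ((0 + mu * cfun f mu t) * P t j) - d1 * ((- Bfun f mu mut t + del + mut * cfun f mu t) * Q t j))).
  { intros t j. apply dpl_sub; apply dpl_scal; auto. }
  assert (HMA0 : 0 <= MA) by (pose proof (HMA 0); pose proof (Rabs_pos (A 0)); lra).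
  assert (HAt : forall t, s <= t <= tau -> - (MA + 1) <= At f mu mut del A s t).
  { intros t Ht. unfold At. specialize (HBint t Ht). pose proof (HMA s). pose proof (Rle_abs (- A s)).
    rewrite Rabs_Ropp in *. nra. }
  assert (HEP : forall t j, P t j = exp (- mu * (IZR j - Cf f mu t))) by (intros; unfold P, prof; f_equal; ring).
  assert (HEQ : forall t j, Q t j = exp (At f mu mut del A s t - mut * (IZR j - Cf f mu t))) by (intros; reflexivity).
  assert (Hsub : forall t j, s <= t <= tau -> 0 < d * P t j - d1 * Q t j ->
     d * P t j - d1 * Q t j <= 2 /\ L2 * (d * P t j - d1 * Q t j) * (d * P t j - d1 * Q t j) <= d1 * del * Q t j).
  { intros t j Ht Hv. rewrite HEP, HEQ in *.
    destruct (subsol d d1 del L2 (MA + 1) (At f mu mut del A s t) (IZR j - Cf f mu t) mu mut Hd Hdel HL2 Hmu Hmut (HAt t Ht) Hd1 Hv)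
      as [_ [H1 H2]]. auto. }
  assert (Hz : forall t j, s <= t <= tau -> (d * P t j - d1 * Q t j) - u t j <= 0).
  { apply (cmp s tau Lam 2 (fun t j => (d * P t j - d1 * Q t j) - u t j)).
    - exact Hst.
    - exact HLam.
    - intros j. specialize (Hs j).
      assert (E1 : phi f mu s j = P s j) by (unfold P; apply phi_prof).
      assert (E2 : phi1 f mu mut A s j = Q s j) by (unfold Q, prof; rewrite (At_s f fu M0 Hf); reflexivity).
      rewrite E1, E2 in Hs. lra.
    - intros t j Ht. assert (0 <= u t j) by (apply Hupos; lra).
      destruct (Rlt_dec 0 (d * P t j - d1 * Q t j)) as [Hv|Hv].
      + destruct (Hsub t j Ht Hv). lra.
      + lra.
    - intros j e He. destruct (rc_combine (fun t => u t j) (fun t => d * P t j - d1 * Q t j) s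
        (sol_rc f t0 u0 u Hsol s j Hs0) (dpl_cont _ _ _ (HSd s j)) e He) as [del' [Hdel' H]].
      exists del'. split; auto. intros t Ht. specialize (H t Ht).
      replace (d * P t j - d1 * Q t j - u t j - (d * P s j - d1 * Q s j - u s j))
        with (- (u t j - (d * P t j - d1 * Q t j) - (u s j - (d * P s j - d1 * Q s j)))) by ring.
      rewrite Rabs_Ropp. auto.
    - intros j t Ht. eexists. split.
      + apply dpl_sub. apply HSd. apply Hder. lra.
      + intros Hzp. unfold lattice_rhs.
        rewrite (psi_coef f mu). replace (0 + mu * cfun f mu t) with (Ef mu + f t 0) by (rewrite (muc f mu Hmu); ring).
        assert (HP := prof_lap f mu mu (fun _ => 0) t j). assert (HQ := prof_lap f mu mut (At f mu mut del A s) t j).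
        fold P in HP. fold Q in HQ.
        assert (Hut : 0 <= u t j) by (apply Hupos; lra).
        assert (Hvp : 0 < d * P t j - d1 * Q t j) by lra.
        assert (Htt : s <= t <= tau) by lra.
        destruct (Hsub t j Htt Hvp) as [Hv2 HvL].
        set (v := d * P t j - d1 * Q t j) in *.
        assert (Hav : f t 0 * v - v * f t v <= L2 * v * v).
        { assert (Hl := HL2lip t 0 v).
          assert (Ha1 : Rabs 0 <= 2) by (rewrite Rabs_R0; lra).
          assert (Ha2 : Rabs v <= 2) by (rewrite Rabs_right; lra).
          specialize (Hl Ha1 Ha2).
          rewrite Rminus_0_l, Rabs_Ropp, (Rabs_right v) in Hl by lra.
          pose proof (Rle_abs (f t 0 - f t v)).
          replace (f t 0 * v - v * f t v) with (v * (f t 0 - f t v)) by ring.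
          assert (v * (f t 0 - f t v) <= v * (L2 * v)) by (apply Rmult_le_compat_l; lra). lra. }
        assert (Hxf : v * f t v - u t j * f t (u t j) <= Lam * (v - u t j)).
        { unfold Lam. apply lip_xf.
          - exact HL'.
          - rewrite Rabs_right by lra. unfold K'; lra.
          - assert (Htt' : t0 <= t <= tau) by lra. specialize (HMu t j Htt'). unfold K'; lra.
          - lra.
          - intros a b Ha Hb. apply HL'lip; auto.
          - apply HFa. lra. }
        assert (0 < Q t j) by (unfold Q, prof; apply exp_pos).
        assert (HdP : d * (P t (j+1)%Z + P t (j-1)%Z) = d * ((Ef mu + 2) * P t j)) by (rewrite HP; ring).
        assert (HdQ : d1 * (Q t (j+1)%Z + Q t (j-1)%Z) = d1 * ((Ef mut + 2) * Q t j)) by (rewrite HQ; ring).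
        unfold v in *. lra. }
  specialize (Hz tau j1 (conj Hst (Rle_refl _))).
  assert (E1 : phi f mu tau j1 = P tau j1) by (unfold P; apply phi_prof).
  rewrite E1, phi1_prof.
  assert (Q tau j1 <= prof f mu mut A tau j1).
  { unfold Q, prof. assert (At f mu mut del A s tau <= A tau) by (unfold At; specialize (Hadm s tau Hst); lra).
    destruct (Rle_lt_or_eq_dec _ _ H) as [h|h]. left; apply exp_increasing; lra. rewrite h; lra. }
  assert (Hd1p : 0 <= d1) by (pose proof (Rmax_l (2 * exp (MA + 1)) (4 * L2 * exp (MA + 1) / del)); pose proof (exp_pos (MA+1)); lra).
  assert (d1 * Q tau j1 <= d1 * prof f mu mut A tau j1) by (apply Rmult_le_compat_l; auto).
  lra.
Qed.

End Aux.
Import Aux.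


Theorem proposition4p1
  (f fu : R -> R -> R) (M0 : R) (Hf : H0 f fu M0)
  (fbar : R) (Hfbar : is_liminf_avg (fun t => f t 0) fbar)
  (mustar : R) (Hmustar_pos : 0 < mustar)
  (Hmustar_min : forall nu, 0 < nu -> speed fbar mustar <= speed fbar nu)
  (gamma : R) (Hgamma : speed fbar mustar < gamma)
  (mu : R) (Hmu : 0 < mu < mustar) (Hmu_eq : speed fbar mu = gamma)
  (mut : R) (Hmut : mu < mut < 2 * mu)
  (HB : liminf_avg_pos (Bfun f mu mut))
  (A : R -> R) (HA : A_admissible A (Bfun f mu mut)) :
  exists D1, forall d1, D1 <= d1 ->
  forall d, 0 < d <= 2 ->
  forall (t0 : R) (u0 : Z -> R), linf_plus u0 ->
  forall u : R -> Z -> R, is_solution f t0 u0 u ->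
    ((forall j, u0 j <= d * phi f mu t0 j + d1 * phi1 f mu mut A t0 j) ->
       forall t, t0 <= t -> forall j,
         u t j <= d * phi f mu t j + d1 * phi1 f mu mut A t j) /\
    ((forall j, d * phi f mu t0 j - d1 * phi1 f mu mut A t0 j <= u0 j) ->
       forall t, t0 <= t -> forall j,
         d * phi f mu t j - d1 * phi1 f mu mut A t j <= u t j).
Proof.
  destruct HA as [[MA HMA] [_ [del [Hdel Hadm]]]].
  destruct (proj1 (proj2 Hf) 2 ltac:(lra)) as [L2 [HL2 HL2lip]].
  assert (Hmu0 : 0 < mu) by lra.
  exists (Rmax (2 * exp (MA + 1)) (4 * L2 * exp (MA + 1) / del)).
  intros d1 Hd1 d Hd t0 u0 [_ Hu0] u Hsol.
  assert (Hd1p : 0 <= d1) by (pose proof (Rmax_l (2 * exp (MA + 1)) (4 * L2 * exp (MA + 1) / del)); pose proof (exp_pos (MA+1)); lra).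
  split.
  - intros Hini. apply (upper f fu M0 Hf mu Hmu0 mut A del Hdel Hadm d d1 ltac:(lra) Hd1p t0 u0 u Hsol Hini).
  - intros Hini t1 Ht1.
    assert (HBc : forall c, t0 <= c <= t1 -> continuity_pt (Bfun f mu mut) c) by (intros; eapply B_cont; eauto).
    destruct (continuity_ab_maj (Bfun f mu mut) t0 t1 Ht1 HBc) as [tb [Htb _]].
    set (h := 1 / (Rabs (Bfun f mu mut tb) + 1)).
    assert (Hh : 0 < h) by (unfold h; apply Rdiv_lt_0_compat; pose proof (Rabs_pos (Bfun f mu mut tb)); lra).
    assert (Hbh : Rabs (Bfun f mu mut tb) * h < 1).
    { unfold h. pose proof (Rabs_pos (Bfun f mu mut tb)).
      replace (Rabs (Bfun f mu mut tb) * (1 / (Rabs (Bfun f mu mut tb) + 1))) with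
        (1 - 1 / (Rabs (Bfun f mu mut tb) + 1)) by (field; lra).
      assert (0 < 1 / (Rabs (Bfun f mu mut tb) + 1)) by (apply Rdiv_lt_0_compat; lra). lra. }
    assert (Hind : forall n : nat, forall tau, t0 <= tau <= t1 -> tau <= t0 + INR n * h ->
      forall j, d * phi f mu tau j - d1 * phi1 f mu mut A tau j <= u tau j).
    { induction n as [|n IH]; intros tau Htau Hn j.
      - simpl in Hn. replace tau with t0 by lra. destruct Hsol as [Hi _]. rewrite Hi. apply Hini.
      - destruct (Rle_dec tau (t0 + INR n * h)) as [Hle|Hgt]. apply IH; auto.
        rewrite S_INR in Hn.
        set (s := t0 + INR n * h) in *.
        assert (Hs0 : t0 <= s) by (unfold s; pose proof (pos_INR n); nra).
        apply Rnot_le_lt in Hgt.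
        assert (Hstau : s <= tau) by lra.
        assert (Hsh : tau <= s + h) by (unfold s; lra).
        apply (lower_step f fu M0 Hf mu Hmu0 mut Hmut A del Hdel MA HMA Hadm L2 HL2 HL2lip d Hd d1 Hd1
                 t0 u0 u Hsol Hu0 s tau Hs0 Hstau).
        + intros x Hx. eapply Rle_trans. apply Rint_le_const with (m := Bfun f mu mut tb).
          intros; eapply B_cont; eauto. lra. intros y Hy. apply Htb. lra.
          assert (Bfun f mu mut tb * (x - s) <= Rabs (Bfun f mu mut tb) * (x - s)) by
            (apply Rmult_le_compat_r; [lra| apply Rle_abs]).
          assert (Rabs (Bfun f mu mut tb) * (x - s) <= Rabs (Bfun f mu mut tb) * h) by
            (apply Rmult_le_compat_l; [apply Rabs_pos| lra]).
          lra.
        + apply IH. lra. lra. }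
    destruct (nat_above ((t1 - t0) / h)) as [n Hn].
    intros j. apply (Hind n). lra.
    assert ((t1 - t0) / h * h <= INR n * h) by (apply Rmult_le_compat_r; lra).
    replace ((t1 - t0) / h * h) with (t1 - t0) in H by (field; lra). lra.
Qed.
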